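(* Let $b:(0,\infty)\to(0,\infty)$ be a slowly varying function. Then there is a function $c:(0,\infty)\to(0,\infty)$ which satisfies $c\approx b$ on $(0,\infty)$, is also slowly varying, and has continuous classical derivatives of all orders (i.e. $c\in\mathcal{C}^\infty((0,\infty))$).
   Context: A measurable function $b:(0,\infty)\to(0,\infty)$ is called slowly varying (s.v.) if for every $\varepsilon>0$ there exist a non-decreasing function $b_\varepsilon$ and a non-increasing function $b_{-\varepsilon}$ on $(0,\infty)$ such that $t^{\varepsilon}b(t)\approx b_\varepsilon(t)$ and $t^{-\varepsilon}b(t)\approx b_{-\varepsilon}(t)$ on $(0,\infty)$. Here $f\approx g$ on a set $A$ means that there is a constant $C\ge 1$ (independent of the argument) such that $C^{-1}g(t)\le f(t)\le C g(t)$ for all $t\in A$. Measurability is with respect to Lebesgue measure. *)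

(* Defs.v *)
From HB Require Import structures.
From mathcomp Require Import all_boot all_order all_algebra.
From mathcomp Require Import all_classical all_reals all_analysis.
Set Implicit Arguments. Unset Strict Implicit. Unset Printing Implicit Defensive.
Import Order.TTheory GRing.Theory Num.Theory numFieldNormedType.Exports.
Local Open Scope classical_set_scope.
Local Open Scope ring_scope.

(* Lebesgue measurable subsets of R: the completion of the Borel sigma-algebra
   w.r.t. Lebesgue measure, i.e. A differs from a Borel set by a subset of a
   Borel null set. *)
Definition lebesgue_measurable_set {R : realType} (A : set R) : Prop :=
  exists B N : set R, [/\ measurable B, measurable N,
    (lebesgue_measure N = 0)%E & (A `\` B) `|` (B `\` A) `<=` N].

Definition lmeasurable_on_pos {R : realType} (f : R -> R) : Prop :=
  forall Y : set R, measurable Y ->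
    lebesgue_measurable_set ([set t | 0 < t] `&` f @^-1` Y).

Definition approx_pos {R : realType} (f g : R -> R) : Prop :=
  exists C : R, 1 <= C /\
    forall t : R, 0 < t -> C^-1 * g t <= f t /\ f t <= C * g t.

Definition nondecr_pos {R : realType} (f : R -> R) : Prop :=
  forall x y : R, 0 < x -> x <= y -> f x <= f y.

Definition nonincr_pos {R : realType} (f : R -> R) : Prop :=
  forall x y : R, 0 < x -> x <= y -> f y <= f x.

(* b : (0,oo) -> (0,oo) (represented as a function R -> R, values on (0,oo)
   positive; values outside (0,oo) are irrelevant). *)
Definition pos_on_pos {R : realType} (b : R -> R) : Prop :=
  forall t : R, 0 < t -> 0 < b t.

Definition slowly_varying {R : realType} (b : R -> R) : Prop :=
  [/\ pos_on_pos b, lmeasurable_on_pos b &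
    forall eps : R, 0 < eps ->
      (exists bp : R -> R, nondecr_pos bp /\
          approx_pos (fun t => t `^ eps * b t) bp) /\
      (exists bm : R -> R, nonincr_pos bm /\
          approx_pos (fun t => t `^ (- eps) * b t) bm)].

Definition smooth_on_pos {R : realType} (c : R -> R) : Prop :=
  forall (n : nat) (x : R), 0 < x ->
    derivable (derive1n n c) x 1 /\ (derive1n n c y @[y --> x] --> derive1n n c x).

(* Main.v *)
Require Import Defs.
From HB Require Import structures.
From mathcomp Require Import all_boot all_order all_algebra.
From mathcomp Require Import all_classical all_reals all_analysis.
From mathcomp Require Import ring lra zify measurable_realfun.
Set Implicit Arguments. Unset Strict Implicit. Unset Printing Implicit Defensive.
Import Order.TTheory GRing.Theory Num.Theory numFieldNormedType.Exports.
Local Open Scope classical_set_scope.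
Local Open Scope ring_scope.


Section Smooth.
Variable R : realType.
Implicit Types f g : R -> R.

Definition Ck (n : nat) f := forall k, (k < n)%N -> forall x : R, derivable (derive1n k f) x 1.

Lemma CkS n f : Ck n.+1 f <-> (forall x, derivable f x 1) /\ Ck n (derive1 f).
Proof.
split.
  move=> h; split; first exact: (h 0%N).
  by move=> k kn x; rewrite -derive1Sn; apply: h.
move=> [h1 h2] [|k] kn x //; rewrite derive1Sn; exact: h2.
Qed.

Lemma Ck_le n m f : (m <= n)%N -> Ck n f -> Ck m f.
Proof. by move=> mn h k km; apply: h; apply: leq_trans mn. Qed.

Lemma derive1_add f g : (forall x, derivable f x 1) -> (forall x, derivable g x 1) ->
  derive1 (f + g) = derive1 f + derive1 g.
Proof. move=> df dg; apply/funext => x; by rewrite derive1E deriveD // -!derive1E. Qed.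

Lemma derive1_mul f g : (forall x, derivable f x 1) -> (forall x, derivable g x 1) ->
  derive1 (f * g) = f * derive1 g + g * derive1 f.
Proof. move=> df dg; apply/funext => x; by rewrite derive1E deriveM // -!derive1E. Qed.

Lemma Ck_add n f g : Ck n f -> Ck n g -> Ck n (f + g).
Proof.
elim: n f g => [|n IH] f g; first by move=> _ _ k.
move=> /CkS[df hf] /CkS[dg hg]; apply/CkS; split.
  by move=> x; apply: derivableD.
by rewrite derive1_add //; apply: IH.
Qed.

Lemma Ck_mul n f g : Ck n f -> Ck n g -> Ck n (f * g).
Proof.
elim: n f g => [|n IH] f g; first by move=> _ _ k.
move=> Hf Hg; move: (Hf) (Hg) => /CkS[df hf] /CkS[dg hg]; apply/CkS; split.
  by move=> x; apply: derivableM.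
rewrite derive1_mul //; apply: Ck_add; apply: IH => //; exact: (Ck_le (leqnSn n)).
Qed.

Lemma Ck_cst n (a : R) : Ck n (cst a).
Proof.
elim: n a => [|n IH] a; first by move=> k.
apply/CkS; split; first by move=> x; exact: derivable_cst.
have -> : derive1 (cst a) = cst 0 by apply/funext => x; rewrite derive1_cst.
exact: IH.
Qed.

Definition smooth f := forall n, Ck n f.

Lemma smooth_derive1 f : smooth f -> smooth (derive1 f).
Proof. by move=> h n; have /CkS[] := h n.+1. Qed.

Lemma smooth_derivable f x : smooth f -> derivable f x 1.
Proof. by move=> h; have := h 1%N 0%N isT x. Qed.

Lemma smooth_add f g : smooth f -> smooth g -> smooth (f + g).
Proof. by move=> hf hg n; apply: Ck_add. Qed.

Lemma smooth_mul f g : smooth f -> smooth g -> smooth (f * g).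
Proof. by move=> hf hg n; apply: Ck_mul. Qed.

Lemma smooth_cst a : smooth (cst a).
Proof. by move=> n; apply: Ck_cst. Qed.

Lemma derivable_comp f g x : derivable f x 1 -> derivable g (f x) 1 -> derivable (g \o f) x 1.
Proof.
move=> /derivable1_diffP df /derivable1_diffP dg; apply/derivable1_diffP.
exact: differentiable_comp.
Qed.

Lemma smooth_affine f (a b : R) : smooth f -> smooth (fun x => f (a * x + b)).
Proof.
move=> hf n; elim: n f hf => [|n IH] f hf; first by move=> k.
have daff : forall x, derivable (fun x : R => a * x + b) x 1.
  move=> x; apply: derivableD; last exact: derivable_cst.
  by apply: derivableM; [exact: derivable_cst|exact: derivable_id].
have daff' : forall x, derive1 (fun x : R => a * x + b) x = a.
  move=> x; rewrite derive1E deriveD; last exact: derivable_cst.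
    rewrite derive_cst addr0 deriveM; [|exact: derivable_cst|exact: derivable_id].
    by rewrite derive_id derive_cst /= scaler0 addr0 /GRing.scale /= mulr1.
  by apply: derivableM; [exact: derivable_cst|exact: derivable_id].
apply/CkS; split.
  move=> x; apply: (derivable_comp (f := fun x => a * x + b) (g := f)) => //.
  exact: smooth_derivable.
have -> : derive1 (fun x => f (a * x + b)) = (fun x => derive1 f (a * x + b)) * cst a.
  apply/funext => x.
  by rewrite [LHS](@derive1_comp _ (fun x => a * x + b) f x (daff x) (@smooth_derivable f (a * x + b) hf)) daff'.
by apply: Ck_mul; [apply: IH; exact: smooth_derive1|exact: Ck_cst].
Qed.

Lemma inv_derivable (x : R) : x != 0 -> derivable (fun y : R => y^-1) x 1.
Proof. by move=> x0; have := (derivableV (f := @id R) (x:=x) (v:=1) x0 (@derivable_id _ _ x 1)). Qed.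

Lemma inv_derive1 (x : R) : x != 0 -> derive1 (fun y : R => y^-1) x = - x^-2.
Proof.
move=> x0; rewrite derive1E (deriveV (f := @id R) (x:=x) (v:=1) x0 (@derivable_id _ _ x 1)).
by rewrite derive_id /GRing.scale /= mulr1.
Qed.

End Smooth.

Section Flat.
Variable R : realType.

Definition E (p : {poly R}) (y : R) : R := p.[y^-1] * expR (- y^-1).
Definition qop (p : {poly R}) : {poly R} := 'X^2 * (p - deriv p).

Lemma E_derive1 p x : x != 0 -> derivable (E p) x 1 /\ derive1 (E p) x = E (qop p) x.
Proof.
move=> x0.
have -> : E p = (fun y => p.[y^-1]) * (fun y => expR (- y^-1)) by [].
have d1 : derivable (fun y : R => p.[y^-1]) x 1.
  exact: (derivable_comp (inv_derivable x0) (@derivable_horner R p x^-1)).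
have dN : derivable (fun y : R => - y^-1) x 1.
  by have := derivableN (f := fun y : R => y^-1) (x:=x) (v:=1) (inv_derivable x0).
have d2 : derivable (fun y : R => expR (- y^-1)) x 1.
  exact: (derivable_comp dN (@derivable_expR R (- x^-1))).
split; first exact: derivableM.
rewrite derive1E deriveM // -!derive1E.
rewrite (derive1_comp (inv_derivable x0) (@derivable_horner R p x^-1)).
rewrite (derive1_comp dN (@derivable_expR R (- x^-1))).
rewrite -derivE inv_derive1 //.
have -> : derive1 (fun y : R => - y^-1) x = x^-2.
  have := deriveN (f := fun y : R => y^-1) (x:=x) (v:=1) (inv_derivable x0).
  rewrite derive1E => ->.
  by rewrite -derive1E inv_derive1 // opprK.
have -> : derive1 expR (- x^-1) = expR (- x^-1).
  by rewrite derive1E derive_val.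
rewrite /E /qop !hornerE /GRing.scale /= exprVn.
move: (x ^+ 2)^-1 (p.[x^-1]) ((deriv p).[x^-1]) (expR (- x^-1)) => a b c d.
ring.
Qed.
End Flat.

Section Bound.
Variable R : realType.

Lemma poly_exp_bound (r : {poly R}) :
  exists M : R, 0 <= M /\ forall y, 1 <= y -> `|r.[y]| * expR (- y) <= M / y.
Proof.
set d := size r.
set A := \sum_(i < d) `|r`_i|.
have A0 : 0 <= A by apply: sumr_ge0 => i _.
have hA : forall y : R, 1 <= y -> `|r.[y]| <= A * y ^+ d.
  move=> y y1; rewrite horner_coef.
  apply: (le_trans (ler_norm_sum _ _ _)).
  rewrite /A mulr_suml; apply: ler_sum => i _.
  rewrite normrM normrX (ger0_norm (le_trans ler01 y1)).
  apply: ler_wpM2l; first exact: normr_ge0.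
  by apply: ler_weXn2l => //; apply: ltnW.
have he : forall y : R, 0 <= y -> y ^+ d.+1 / (d.+1)`!%:R <= expR y.
  move=> y y0; apply: le_trans (expR_ge1Dxn d y0).
  by rewrite lerDr.
exists (A * (d.+1)`!%:R); split; first by apply: mulr_ge0 => //.
move=> y y1.
have y0 : 0 < y by apply: lt_le_trans y1.
have f0 : (0 : R) < (d.+1)`!%:R by rewrite ltr0n fact_gt0.
have yd0 : 0 < y ^+ d.+1 / (d.+1)`!%:R by apply: divr_gt0 => //; apply: exprn_gt0.
apply: (le_trans (ler_wpM2r (expR_ge0 _) (hA y y1))).
rewrite expRN.
have : (expR y)^-1 <= (y ^+ d.+1 / (d.+1)`!%:R)^-1.
  by rewrite lef_pV2 ?he ?ltW // posrE expR_gt0.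
move=> hinv.
apply: (le_trans (ler_wpM2l _ hinv)).
  by apply: mulr_ge0 => //; apply: exprn_ge0; apply: ltW.
rewrite invfM invrK exprS invfM.
have yn : y != 0 by rewrite gt_eqF.
have ydn : y ^+ d != 0 by rewrite expf_neq0.
rewrite le_eqVlt; apply/orP; left; apply/eqP.
field. by rewrite ydn yn.
Qed.

End Bound.

Section G.
Variable R : realType.

Definition G (p : {poly R}) (x : R) : R := if 0 < x then E p x else 0.

Lemma G_lim0 p : (fun h : R => h^-1 *: ((G p \o shift 0) (h *: 1) - G p 0)) @ 0^' --> 0.
Proof.
have [M [M0 HM]] := poly_exp_bound (p * 'X).
apply/cvgr0Pnorm_le => eps eps0.
have m0 : 0 < Num.min 1 (eps / (M + 1)).
  by rewrite lt_min ltr01 /= divr_gt0 // ltr_wpDl.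
near=> h.
have h0 : h != 0 by near: h; exact: nbhs_dnbhs_neq.
have hs : `|h| < Num.min 1 (eps / (M + 1)) by near: h; exact: dnbhs0_lt.
have -> : (G p \o shift 0) (h *: 1) = G p h.
  rewrite /comp; congr (G p _); by rewrite /= addr0 [h%:A]mulr1.
have -> : G p 0 = 0 by rewrite /G ltxx.
rewrite subr0 /G.
case: ifPn => hp; last by rewrite /GRing.scale /= mulr0 normr0 ltW.
move: hs; rewrite lt_min (gtr0_norm hp) => /andP[h1 he].
have := HM h^-1; rewrite hornerMX /E.
have -> : `|p.[h^-1] / h| * expR (- h^-1) = `|h^-1 *: (p.[h^-1] * expR (- h^-1))|.
  rewrite /GRing.scale /= !normrM (ger0_norm (expR_ge0 _)).
  ring.
move=> H; apply: (le_trans (H _)).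
  by rewrite -[1]invr1 lef_pV2 ?ltW // posrE.
rewrite invrK.
apply: (le_trans (ler_wpM2l M0 (ltW he))).
rewrite mulrA ler_pdivrMr ?ltr_wpDl // mulrDr mulr1 mulrC lerDl ltW //.

Unshelve. all: by end_near.
Qed.


Lemma G_der p x : derivable (G p) x 1 /\ derive1 (G p) x = G (qop p) x.
Proof.
have [x0|x0|->] := ltgtP x 0.
- have nx : \forall y \near x, G p y = cst 0 y.
    have : x \in `]-oo, 0[ by rewrite in_itv /=.
    move=> /near_in_itvNyo; apply: filterS => y; rewrite in_itv /= /G => y0.
    by rewrite ltNge ltW.
  split.
    apply: (near_eq_derivable (f := cst 0)); last exact: derivable_cst.
    by near=> y; rewrite (near nx).
  rewrite derive1E (near_eq_derive _ nx) derive_cst /G.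
  by rewrite ltNge ltW.
- have nx : \forall y \near x, G p y = E p y.
    have : x \in `]0, +oo[ by rewrite in_itv /= x0.
    move=> /near_in_itvoy; apply: filterS => y; rewrite in_itv /= andbT /G => y0.
    by rewrite y0.
  have [dE vE] := E_derive1 p (lt0r_neq0 x0).
  split.
    apply: (near_eq_derivable (f := E p)) => //; near=> y; by rewrite (near nx).
  by rewrite derive1E (near_eq_derive _ nx) -derive1E vE /G x0.
- split.
    by apply/cvg_ex; exists 0; exact: G_lim0.
  rewrite derive1E /derive; have -> : G (qop p) 0 = 0 by rewrite /G ltxx.
  apply: cvg_lim => //.
  exact: G_lim0.
Unshelve. all: by end_near.
Qed.


Lemma G_derive1n n p : derive1n n (G p) = G (iter n (@qop R) p).
Proof.
elim: n p => [|n IH] p //.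
rewrite derive1Sn.
have -> : derive1 (G p) = G (qop p) by apply/funext => x; have [_ ->] := G_der p x.
by rewrite IH iterSr.
Qed.

Lemma G_smooth p : smooth (G p).
Proof. by move=> n k _ x; rewrite G_derive1n; exact: (G_der _ x).1. Qed.

Definition phi := G 1.

Lemma phi_pos x : 0 < x -> phi x = expR (- x^-1).
Proof. by move=> x0; rewrite /phi /G x0 /E hornerC mul1r. Qed.

Lemma phi_npos x : x <= 0 -> phi x = 0.
Proof. by move=> x0; rewrite /phi /G ltNge x0. Qed.

Lemma phi_ge0 x : 0 <= phi x.
Proof. by case: (ltP 0 x) => x0; [rewrite phi_pos // expR_ge0|rewrite phi_npos]. Qed.

Lemma phi_le1 x : phi x <= 1.
Proof.
case: (ltP 0 x) => x0; last by rewrite phi_npos.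
by rewrite phi_pos // expR_le1 oppr_le0 invr_ge0 ltW.
Qed.

Lemma phi_gt0 x : 0 < x -> 0 < phi x.
Proof. by move=> x0; rewrite phi_pos // expR_gt0. Qed.

Lemma phi_mono x y : 0 < x -> x <= y -> phi x <= phi y.
Proof.
move=> x0 xy; have y0 := lt_le_trans x0 xy.
rewrite !phi_pos // ler_expR lerN2 lef_pV2 // posrE //.
Qed.

End G.

Section Psi.
Variable R : realType.

Definition K0 : R := expR 1 + 1.
Definition psi (x : R) : R := phi (x - 2^-1) * phi (K0 - x).

Lemma smooth_scale (f : R -> R) (a : R) : smooth f -> smooth (fun x => f (a * x)).
Proof.
move=> hf; have := @smooth_affine R f a 0 hf.
by have -> : (fun x => f (a * x + 0)) = (fun x => f (a * x)) by apply/funext => x; rewrite addr0.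
Qed.

Lemma psi_smooth : smooth psi.
Proof.
have -> : psi = (fun x => phi (1 * x + - 2^-1)) * (fun x => phi ((-1) * x + K0)).
  apply/funext => x; transitivity (phi (1 * x - 2^-1) * phi (-1 * x + K0)); last by [].
  by rewrite /psi mul1r mulN1r [- x + _]addrC.
apply: smooth_mul; apply: smooth_affine; exact: G_smooth.
Qed.

Lemma psi_ge0 x : 0 <= psi x.
Proof. by rewrite /psi mulr_ge0 // phi_ge0. Qed.

Lemma psi_le1 x : psi x <= 1.
Proof.
rewrite /psi -[1]mulr1; apply: ler_pM; rewrite ?phi_ge0 ?phi_le1 //.
Qed.

Lemma psi_lo x : x <= 2^-1 -> psi x = 0.
Proof. by move=> h; rewrite /psi phi_npos ?mul0r // subr_le0. Qed.

Lemma psi_hi x : K0 <= x -> psi x = 0.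
Proof. by move=> h; rewrite /psi (@phi_npos _ (K0 - x)) ?mulr0 // subr_le0. Qed.

Lemma psi_mid x : 1 <= x -> x <= expR 1 -> phi 2^-1 * phi 1 <= psi x.
Proof.
move=> x1 xe; rewrite /psi; apply: ler_pM; rewrite ?phi_ge0 //.
  apply: phi_mono; first by rewrite invr_gt0.
  by rewrite lerBrDr; lra.
apply: phi_mono => //; rewrite /K0 lerBrDr addrC lerD2r //.
Qed.

Lemma delta_gt0 : 0 < phi (2^-1 : R) * phi 1.
Proof. by rewrite mulr_gt0 // phi_gt0 // invr_gt0. Qed.

End Psi.

Section Cons.
Variable R : realType.
Variable b : R -> R.

Definition gk (m : int) (t : R) : R := b (expR m%:~R) * psi (expR (- m%:~R) * t).
Definition F (m : int) (t : R) : R := gk (m - 2) t + gk (m - 1) t + gk m t + gk (m + 1) t + gk (m + 2) t.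
Definition S3 (n : int) (t : R) : R := gk (n - 1) t + gk n t + gk (n + 1) t.
Definition cfun (t : R) : R := F (Num.floor (ln t)) t.

Lemma gk_smooth m : smooth (gk m).
Proof.
have -> : gk m = cst (b (expR m%:~R)) * (fun t => psi (expR (- m%:~R) * t)) by [].
apply: smooth_mul; first exact: smooth_cst.
apply: smooth_scale; exact: psi_smooth.
Qed.

Lemma F_smooth m : smooth (F m).
Proof.
have -> : F m = gk (m - 2) + gk (m - 1) + gk m + gk (m + 1) + gk (m + 2) by [].
by do 4 (apply: smooth_add; last exact: gk_smooth); exact: gk_smooth.
Qed.

Lemma e_ge2 : 2 <= expR 1 :> R.
Proof. have := expR_ge1Dx (1:R). done. Qed.

Lemma scale_eq (t m : R) : 0 < t -> expR (- m) * t = expR (ln t - m).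
Proof. move=> t0; by rewrite expRD lnK ?posrE // mulrC. Qed.

Lemma gk_lo t m : 0 < t -> (m <= Num.floor (ln t) - 2)%R -> gk m t = 0.
Proof.
move=> t0; set n := Num.floor (ln t).
rewrite -(ler_int R) rmorphB /= => hm.
have hn : (n%:~R : R) <= ln t by exact: Num.Theory.floor_le.
rewrite /gk psi_hi ?mulr0 // scale_eq //.
apply: (@le_trans _ _ (expR 2)).
  have -> : (2 : R) = 1 + 1 by [].
  rewrite expRD /K0.
  have e2 := e_ge2.
  have e0 : 0 <= expR (1:R) - 2 by rewrite subr_ge0.
  have : 0 <= (expR (1:R) - 2) * expR 1 by apply: mulr_ge0 => //; exact: expR_ge0.
  lra.
by rewrite ler_expR; lra.
Qed.

Lemma gk_hi t m : 0 < t -> (Num.floor (ln t) + 2 <= m)%R -> gk m t = 0.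
Proof.
move=> t0; set n := Num.floor (ln t).
rewrite -(ler_int R) rmorphD /= => hm.
have hn : ln t < (n + 1)%:~R by exact: Num.Theory.floorD1_gt.
rewrite rmorphD /= in hn.
rewrite /gk psi_lo ?mulr0 // scale_eq //.
apply: (@le_trans _ _ (expR (-1))).
  by rewrite ler_expR; lra.
rewrite expRN lef_pV2 ?posrE ?expR_gt0 //; exact: e_ge2.
Qed.

End Cons.

Section Loc.
Variable R : realType.
Variable b : R -> R.

Lemma F_S3 t m : 0 < t -> (Num.floor (ln t) - 1 <= m)%R -> (m <= Num.floor (ln t) + 1)%R ->
  F b m t = S3 b (Num.floor (ln t)) t.
Proof.
move=> t0; set n := Num.floor (ln t) => h1 h2.
have : m = n - 1 \/ m = n \/ m = n + 1 by lia.
rewrite /F /S3.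
case=> [->|[->|->]].
- rewrite (@gk_lo _ b t (n - 1 - 2)) // ?(@gk_lo _ b t (n - 1 - 1)) //; try lia.
  have -> : n - 1 + 1 = n by ring.
  have -> : n - 1 + 2 = n + 1 by ring.
  by rewrite !add0r.
- rewrite (@gk_lo _ b t (n - 2)) // ?(@gk_hi _ b t (n + 2)) //; try lia.
  by rewrite add0r addr0.
- rewrite (@gk_hi _ b t (n + 1 + 1)) // ?(@gk_hi _ b t (n + 1 + 2)) //; try lia.
  have -> : n + 1 - 2 = n - 1 by ring.
  have -> : n + 1 - 1 = n by ring.
  by rewrite !addr0.
Qed.

Lemma c_S3 (t : R) : 0 < t -> cfun b t = S3 b (Num.floor (ln t)) t.
Proof. move=> t0; apply: F_S3 => //; lia. Qed.

Lemma c_near (t0 : R) : 0 < t0 -> \forall t \near t0, cfun b t = F b (Num.floor (ln t0)) t.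
Proof.
move=> t00; set n0 := Num.floor (ln t0).
have hin : t0 \in `]expR (n0 - 1)%:~R, expR (n0 + 1)%:~R[.
  rewrite in_itv /=; apply/andP; split.
    rewrite -[X in _ < X](lnK (x:=t0)) ?posrE // ltr_expR.
    have := floor_le (ln t0); rewrite -/n0 rmorphB /=; lra.
  rewrite -[X in X < _](lnK (x:=t0)) ?posrE // ltr_expR.
  exact: floorD1_gt.
move: (near_in_itvoo hin); apply: filterS => t.
rewrite in_itv /= => /andP[lo hi].
have t0' : 0 < t by apply: lt_trans lo; exact: expR_gt0.
rewrite -[X in _ < X](lnK (x:=t)) ?posrE // ltr_expR in lo.
rewrite -[X in X < _](lnK (x:=t)) ?posrE // ltr_expR in hi.
have f1 : (n0 - 1 <= Num.floor (ln t))%R by rewrite floor_ge_int ltW.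
have f2 : (Num.floor (ln t) < n0 + 1)%R by rewrite floor_lt_int.
rewrite c_S3 // F_S3 //; lia.
Qed.

End Loc.

Section Sm.
Variable R : realType.

Lemma near_derive1n (f g : R -> R) (x : R) : (\forall y \near x, f y = g y) ->
  forall n, \forall y \near x, derive1n n f y = derive1n n g y.
Proof.
move=> h n; elim: n => [|n IH] //.
have := nbhs_interior IH; apply: filterS => y /= hy.
change (derive1 (derive1n n f) y = derive1 (derive1n n g) y).
by rewrite derive1E (near_eq_derive _ hy) -derive1E.
Qed.

Lemma c_smooth (b : R -> R) : smooth_on_pos (cfun b).
Proof.
move=> n x x0.
have hn := near_derive1n (c_near b x0) n.
have d : derivable (derive1n n (cfun b)) x 1.
  apply: (near_eq_derivable (f := derive1n n (F b (Num.floor (ln x))))).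
    by near=> y; rewrite (near hn).
  by have := @F_smooth R b (Num.floor (ln x)) n.+1 n (ltnSn n) x.
split => //.
exact/differentiable_continuous/derivable1_diffP.
Unshelve. all: by end_near.
Qed.

End Sm.

Section Bd.
Variable R : realType.

Lemma approx_w (f g h w : R -> R) : (forall t, 0 < t -> 0 <= w t) ->
  approx_pos f g -> approx_pos (fun t => w t * g t) h -> approx_pos (fun t => w t * f t) h.
Proof.
move=> w0 [C1 [C11 H1]] [C2 [C21 H2]].
have C10 : 0 < C1 by apply: lt_le_trans C11.
have C20 : 0 < C2 by apply: lt_le_trans C21.
exists (C1 * C2); split; first by rewrite -[1]mulr1 ler_pM.
move=> t t0; have [a1 a2] := H1 t t0; have [b1 b2] := H2 t t0; split.
- rewrite invfM -mulrA; apply: (le_trans (ler_wpM2l _ b1)); first by rewrite invr_ge0 ltW.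
  rewrite mulrCA; apply: ler_wpM2l; first exact: w0.
  exact: a1.
- apply: (le_trans (ler_wpM2l (w0 t t0) a2)).
  rewrite mulrCA -mulrA; apply: ler_wpM2l; [exact: ltW|exact: b2].
Qed.

End Bd.

Section Rat.
Variable R : realType.

Lemma sv_ratio (b : R -> R) : slowly_varying b ->
  exists L : R, 0 < L /\ forall s t, 0 < s -> 0 < t -> b s <= L * (s / t + t / s) * b t.
Proof.
move=> [bpos _ H]; have [[bp [hbp [C1 [C11 H1]]]] [bm [hbm [C2 [C21 H2]]]]] := H 1 ltr01.
have C10 : 0 < C1 by apply: lt_le_trans C11.
have C20 : 0 < C2 by apply: lt_le_trans C21.
exists (C1 * C1 + C2 * C2); split; first by rewrite addr_gt0 // mulr_gt0.
move=> s t s0 t0.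
have bs0 := ltW (bpos s s0); have bt0 := ltW (bpos t t0).
have st0 : 0 <= s / t by rewrite divr_ge0 // ltW.
have ts0 : 0 <= t / s by rewrite divr_ge0 // ltW.
have ps : s `^ 1 = s := powRr1 (ltW s0).
have pt : t `^ 1 = t := powRr1 (ltW t0).
case: (leP s t) => st.
-
  have A : s * b s <= C1 * C1 * (t * b t).
    have [_ h1] := H1 s s0; rewrite ps in h1.
    have [h2 _] := H1 t t0; rewrite pt in h2.
    have h3 := hbp s t s0 st.
    apply: (le_trans h1); rewrite -mulrA; apply: ler_wpM2l; first exact: ltW.
    apply: (le_trans h3).
    by rewrite -ler_pdivrMl // mulrC.
  have B : b s <= C1 * C1 * (t / s) * b t.
    have sn : s != 0 by rewrite gt_eqF.
    rewrite -(ler_pM2l s0); apply: (le_trans A).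
    rewrite le_eqVlt; apply/orP; left; apply/eqP; field; exact: sn.
  apply: (le_trans B); apply: ler_wpM2r => //; apply: ler_pM.
  + by rewrite mulr_ge0 // ltW.
  + done.
  + by rewrite lerDl mulr_ge0 // ltW.
  + by rewrite lerDr.
- have A : s^-1 * b s <= C2 * C2 * (t^-1 * b t).
    have [_ h1] := H2 s s0; rewrite powRN ps in h1.
    have [h2 _] := H2 t t0; rewrite powRN pt in h2.
    have h3 := hbm t s t0 (ltW st).
    apply: (le_trans h1); rewrite -mulrA; apply: ler_wpM2l; first exact: ltW.
    apply: (le_trans h3).
    by rewrite -ler_pdivrMl // mulrC.
  have B : b s <= C2 * C2 * (s / t) * b t.
    have tn : t != 0 by rewrite gt_eqF.
    have sn : s != 0 by rewrite gt_eqF.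
    have -> : b s = s * (s^-1 * b s) by field; exact: sn.
    apply: (le_trans (ler_wpM2l (ltW s0) A)).
    rewrite le_eqVlt; apply/orP; left; apply/eqP; field; rewrite ?sn ?tn //.
  apply: (le_trans B); apply: ler_wpM2r => //; apply: ler_pM.
  + by rewrite mulr_ge0 // ltW.
  + done.
  + by rewrite lerDr mulr_ge0 // ltW.
  + by rewrite lerDl.
Qed.

End Rat.

Section Fin.
Variable R : realType.

Lemma ratio_Q (t : R) (m : int) : 0 < t -> (Num.floor (ln t) - 1 <= m)%R -> (m <= Num.floor (ln t) + 1)%R ->
  expR m%:~R / t + t / expR m%:~R <= expR 1 + expR 2.
Proof.
move=> t0; set n := Num.floor (ln t) => h1 h2.
have hn : (n%:~R : R) <= ln t by exact: floor_le.
have hn' : ln t < (n + 1)%:~R by exact: floorD1_gt.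
rewrite rmorphD /= in hn'.
rewrite -(ler_int R) rmorphB /= in h1.
rewrite -(ler_int R) rmorphD /= in h2.
have et : t = expR (ln t) by rewrite lnK ?posrE.
rewrite [X in _ / X + _]et [X in _ + X / _]et -!expRB.
apply: lerD; rewrite ler_expR; lra.
Qed.

Lemma c_bounds (b : R -> R) : slowly_varying b ->
  exists P d : R, [/\ 0 < P, 0 < d & forall t, 0 < t ->
    d / P * b t <= cfun b t /\ cfun b t <= 3 * P * b t].
Proof.
move=> sv; have [L [L0 HL]] := sv_ratio sv.
have [bpos _ _] := sv.
set Q := expR (1:R) + expR 2.
have Q0 : 0 < Q by rewrite addr_gt0 // expR_gt0.
exists (L * Q), (phi (2^-1 : R) * phi 1); split.
- exact: mulr_gt0.
- exact: delta_gt0.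
move=> t t0; set n := Num.floor (ln t).
have hrange : forall m : int, (n - 1 <= m)%R -> (m <= n + 1)%R ->
    b (expR m%:~R) <= L * Q * b t /\ b t <= L * Q * b (expR m%:~R).
  move=> m h1 h2; have rQ := ratio_Q t0 h1 h2.
  have em0 : 0 < expR (m%:~R : R) := expR_gt0 _.
  split.
    apply: (le_trans (HL _ _ em0 t0)); apply: ler_wpM2r; first exact: ltW (bpos t t0).
    by apply: ler_wpM2l => //; exact: ltW.
  apply: (le_trans (HL _ _ t0 em0)); apply: ler_wpM2r; first exact: ltW (bpos _ em0).
  by apply: ler_wpM2l; [exact: ltW|rewrite addrC].
have gk_up : forall m : int, (n - 1 <= m)%R -> (m <= n + 1)%R -> gk b m t <= L * Q * b t.
  move=> m h1 h2; have [h _] := hrange m h1 h2.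
  apply: le_trans h; rewrite /gk -[X in _ <= X]mulr1; apply: ler_wpM2l.
    exact: ltW (bpos _ (expR_gt0 _)).
  exact: psi_le1.
have gk_ge0 : forall m : int, 0 <= gk b m t.
  move=> m; rewrite /gk mulr_ge0 //; [exact: ltW (bpos _ (expR_gt0 _))|exact: psi_ge0].
rewrite c_S3 // /S3; split.
- have [_ h] := hrange n ltac:(lia) ltac:(lia).
  have hb : b t / (L * Q) <= b (expR n%:~R).
    by rewrite ler_pdivrMr ?mulr_gt0 // mulrC.
  have hp : phi (2^-1 : R) * phi 1 <= psi (expR (- n%:~R) * t).
    rewrite scale_eq //; apply: psi_mid.
      have := floor_le (ln t); rewrite -/n => hh.
      rewrite -[X in X <= _]expR0 ler_expR; lra.
    rewrite ler_expR; have := floorD1_gt (ln t); rewrite rmorphD /= -/n; lra.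
  apply: (@le_trans _ _ (gk b n t)); last first.
    have := gk_ge0 (n - 1); have := gk_ge0 (n + 1); lra.
  rewrite /gk.
  have -> : phi (2^-1 : R) * phi 1 / (L * Q) * b t = (b t / (L * Q)) * (phi 2^-1 * phi 1) by ring.
  apply: ler_pM => //.
    by rewrite divr_ge0 ?ltW ?bpos // mulr_gt0.
  by rewrite mulr_ge0 ?phi_ge0.
- have := gk_up (n - 1) ltac:(lia) ltac:(lia).
  have := gk_up n ltac:(lia) ltac:(lia).
  have := gk_up (n + 1) ltac:(lia) ltac:(lia).
  lra.
Qed.

End Fin.


Theorem theorem1p2 (R : realType) (b : R -> R) :
  slowly_varying b ->
  exists c : R -> R,
    [/\ pos_on_pos c, approx_pos c b, slowly_varying c & smooth_on_pos c].
Proof.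
move=> sv; have [P [d [P0 d0 Hb]]] := c_bounds sv.
have [bpos _ Hsv] := sv.
have cpos : pos_on_pos (cfun b).
  move=> t t0; have [h _] := Hb t t0; apply: lt_le_trans h.
  by rewrite mulr_gt0 // ?divr_gt0 // bpos.
have Pd0 : 0 < P / d by rewrite divr_gt0.
have capp : approx_pos (cfun b) b.
  exists (3 * P + P / d + 1); split.
    lra.
  move=> t t0; have [h1 h2] := Hb t t0; have bt := ltW (bpos t t0); split.
    apply: le_trans h1; apply: ler_wpM2r => //.
    rewrite -(invf_div P d) lef_pV2 ?posrE ?Pd0 //; lra.

  apply: (le_trans h2); apply: ler_wpM2r => //.
  lra.
have csm := c_smooth b.
exists (cfun b); split => //.
split => //.
- move=> Y mY.
  exists ([set t | 0 < t] `&` cfun b @^-1` Y), set0; split.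
  + have : measurable_fun [set t : R | 0 < t] (cfun b).
      apply: open_continuous_measurable_fun; first exact: open_gt.
      move=> x; rewrite inE /= => x0; exact: (csm 0%N x x0).2.
    by move=> /(_ (open_measurable (open_gt (y:=0))) Y mY).
  + exact: measurable0.
  + exact: measure0.
  + by rewrite setDv setU0.
- move=> eps eps0; have [[bp [hbp ap]] [bm [hbm am]]] := Hsv eps eps0.
  split; [exists bp|exists bm]; split => //; apply: approx_w capp _ => //;
    move=> t t0; exact: powR_ge0.
Qed.
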